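(* For every nonempty caterpillar $S\subset\mathbb N$ and every $r\in\mathbb N$, \[ \{D\subset\delta(S): |D|=r\} = \{\delta(Y): Y\subset S,\ |Y|=r+1\}. \]
   Context: For $m\in\mathbb N$ let $d(m)$ be the finite set of integers with $m=\sum_{i\in d(m)}2^i$. For a finite $S\subset\mathbb N$ with $|S|\geq2$, $s(S)=\max\{i:\exists x,y\in S,\ i\in d(x)\setminus d(y)\}$ (the first splitting index); with $S_0=\{x\in S:s(S)\notin d(x)\}$, $S_1=\{x\in S:s(S)\in d(x)\}$, $(S_0,S_1)$ is the split of $S$. Caterpillars: the empty set and singletons are caterpillars; a finite $S$ with $|S|\geq 2$ and split $(S_0,S_1)$ is a caterpillar iff one of $S_0,S_1$ is a singleton and the other a caterpillar (every subset of a caterpillar is a caterpillar). For a caterpillar $S$, $\delta(S)=\{s(\{x,y\}):x,y\in S,\ x\neq y\}$. *)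

(* Defs.v *)
From mathcomp Require Import all_boot finmap.
Set Implicit Arguments. Unset Strict Implicit. Unset Printing Implicit Defensive.
Local Open Scope fset_scope.

Definition d (m : nat) : {fset nat} :=
  [fset i | i in iota 0 m.+1 & odd (m %/ 2 ^ i)].

(* first splitting index s(S) = max { i : exists x y in S, i \in d x \ d y }
   (meaningful when #|S| >= 2; every such i is <= max S). *)
Definition s (S : {fset nat}) : nat :=
  \max_(i <- iota 0 (\max_(x <- S) x).+1
         | has (fun x => has (fun y => (i \in d x) && (i \notin d y)) S) S) i.

Definition split0 (S : {fset nat}) : {fset nat} := [fset x in S | s S \notin d x].
Definition split1 (S : {fset nat}) : {fset nat} := [fset x in S | s S \in d x].

Inductive caterpillar : {fset nat} -> Prop :=
| cat_small S : #|` S| <= 1 -> caterpillar S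
| cat_split S : 2 <= #|` S| ->
    (#|` split0 S| = 1 /\ caterpillar (split1 S)) \/ (#|` split1 S| = 1 /\ caterpillar (split0 S)) ->
    caterpillar S.

Definition delta (S : {fset nat}) : {fset nat} :=
  [fset s [fset x; y] | x in S, y in S & x != y].

(* Main.v *)
Require Import Defs.
From mathcomp Require Import all_boot finmap zify.
Set Implicit Arguments. Unset Strict Implicit.
Local Open Scope fset_scope.

Lemma in_d m i : (i \in d m) = odd (m %/ 2 ^ i).
Proof.
rewrite /d !inE mem_iota.
have ->: ((i == 0) || (0 < i < 1 + m)) = (i <= m) by case: i => //= i; rewrite add1n ltnS.
case: leqP => //= h. rewrite divn_small //. apply: leq_trans (ltnW (ltn_expl _ (isT : 1 < 2))). by [].
Qed.

Lemma in_d_le m i : i \in d m -> i <= m.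
Proof. rewrite /d !inE mem_iota.
have ->: ((i == 0) || (0 < i < 1 + m)) = (i <= m) by case: i => //= i; rewrite add1n ltnS.
by case/andP. Qed.

Lemma half_div x i : x./2 %/ 2 ^ i = x %/ 2 ^ i.+1.
Proof. by rewrite -divn2 -divnMA expnS mulnC. Qed.

Lemma bits_eq x y : (forall i, (i \in d x) = (i \in d y)) -> x = y.
Proof.
move=> H.
suff: forall n x y, (x + y <= n)%N -> (forall i, odd (x %/ 2 ^ i) = odd (y %/ 2 ^ i)) -> x = y.
  move/(_ (x + y)%N x y (leqnn _)); apply => i; by rewrite -!in_d.
elim=> [|n IH] {x y H} x y.
  by case: x; case: y.
move=> hn H.
have h0 := H 0. rewrite expn0 !divn1 in h0.
have e: x./2 = y./2.
  apply: IH.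
    have hx := odd_double_half x. have hy := odd_double_half y.
    rewrite -!muln2 in hx hy. move: (odd x) (odd y) hx hy => a b. case: a; case: b; lia.
  move=> i. by rewrite !half_div.
by rewrite -(odd_double_half x) -(odd_double_half y) e h0.
Qed.

Definition P (T : {fset nat}) (i : nat) :=
  has (fun x => has (fun y => (i \in d x) && (i \notin d y)) T) T.

Lemma PP T i : reflect (exists x y, [/\ x \in T, y \in T, i \in d x & i \notin d y]) (P T i).
Proof.
apply: (iffP hasP).
  move=> [x xT /hasP [y yT /andP[a b]]]. by exists x, y.
move=> [x [y [xT yT a b]]]. exists x => //. apply/hasP. exists y => //. by rewrite a b.
Qed.

Lemma P_sub T T' i : T `<=` T' -> P T i -> P T' i.
Proof.
move=> /fsubsetP sub /PP [x [y [xT yT a b]]]. apply/PP. exists x, y. by split => //; apply: sub.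
Qed.

Lemma P_pair x y i : P [fset x; y] i = ((i \in d x) != (i \in d y)).
Proof.
apply/PP/idP.
  move=> [u [v [uT vT a b]]]. move: uT vT a b. rewrite !in_fsetU !in_fset1.
  by case/orP=> /eqP ->; case/orP => /eqP ->; case: (i \in d x); case: (i \in d y).
case hx: (i \in d x); case hy: (i \in d y) => //= _.
  exists x, y. by rewrite !in_fsetU !in_fset1 !eqxx hx hy orbT.
exists y, x. by rewrite !in_fsetU !in_fset1 !eqxx hx hy orbT.
Qed.

Lemma s_ge T i : P T i -> i <= s T.
Proof.
move=> Hi. rewrite /s. apply: (@leq_bigmax_seq _ _ (P T) (fun i => i)) => //.
rewrite mem_iota add0n ltnS leq0n /=. case/PP: Hi => [x [y [xT _ a _]]].
have h1 := @in_d_le _ _ a. have h2 : x <= \max_(x0 <- T) x0 := @leq_bigmax_seq _ _ xpredT (fun i => i) x xT isT.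
exact: leq_trans h1 h2.
Qed.

Lemma bigmax_P (r : seq nat) (Q : pred nat) :
  has Q r -> Q (\max_(i <- r | Q i) i).
Proof.
elim: r => //= a r IH. rewrite big_cons.
case Pa: (Q a) => /=.
  case: (boolP (has Q r)) => [/IH Hr|].
    rewrite /maxn. by case: ltnP.
  move=> hn. have ->: \max_(i <- r | Q i) i = 0.
    rewrite big_seq_cond big_pred0 // => i. apply/negP=> /andP[ir Pi]. by move/hasP: hn; apply; exists i.
  by rewrite maxn0.
exact: IH.
Qed.

Lemma s_P T i : P T i -> P T (s T).
Proof.
move=> Hi. rewrite /s. apply: bigmax_P. apply/hasP. exists i => //.
rewrite mem_iota add0n ltnS leq0n /=. case/PP: Hi => [x [y [xT _ a _]]].
have h1 := @in_d_le _ _ a. have h2 : x <= \max_(x0 <- T) x0 := @leq_bigmax_seq _ _ xpredT (fun i => i) x xT isT.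
exact: leq_trans h1 h2.
Qed.

Lemma K1 S x y : x \in S -> y \in S -> (s S \in d x) != (s S \in d y) -> s [fset x; y] = s S.
Proof.
move=> xS yS h. have Pt : P [fset x; y] (s S) by rewrite P_pair.
have sub : [fset x; y] `<=` S by apply/fsubsetP => z; rewrite !in_fsetU !in_fset1 => /orP[] /eqP ->.
apply/eqP; rewrite eqn_leq (s_ge Pt) andbT. apply: s_ge. apply: P_sub sub _. exact: s_P Pt.
Qed.

Lemma K2 S x y : x \in S -> y \in S -> x != y -> (s S \in d x) = (s S \in d y) -> s [fset x; y] < s S.
Proof.
move=> xS yS nxy h.
have sub : [fset x; y] `<=` S by apply/fsubsetP => z; rewrite !in_fsetU !in_fset1 => /orP[] /eqP ->.
have [j Pj]: exists j, P [fset x; y] j.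
  case: (boolP [exists j : 'I_(maxn x y).+1, (val j \in d x) != (val j \in d y)]).
    move/existsP=> [j hj]. exists j. by rewrite P_pair.
  move/existsPn => H. case/negP: nxy. apply/eqP/bits_eq => i.
  case: (ltnP i (maxn x y).+1) => hi.
    move: (H (Ordinal hi)) => /=. by case: (_ \in _); case: (_ \in _).
  case hx: (i \in d x). have := @in_d_le _ _ hx. lia.
  case hy: (i \in d y) => //. have := @in_d_le _ _ hy. lia.
have Ps := s_P Pj.
rewrite ltn_neqAle. apply/andP; split.
  apply/eqP => e. by move: Ps; rewrite e P_pair h eqxx.
apply: s_ge. exact: P_sub sub Ps.
Qed.

Lemma inDelta z S : reflect (exists x y, [/\ x \in S, y \in S, x != y & z = s [fset x; y]]) (z \in delta S).
Proof.
apply: (iffP (imfset2P _ _ _ _ _)).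
- move=> [x Hx [y Hy ->]]. rewrite !inE /= in Hx Hy. case/andP: Hy => Hy nxy. by exists x, y.
- move=> [x [y [Hx Hy nxy ->]]]. exists x => //. exists y => //. by rewrite !inE /= Hy nxy.
Qed.

Lemma delta_sub Y S : Y `<=` S -> delta Y `<=` delta S.
Proof.
move=> /fsubsetP sub. apply/fsubsetP => z /inDelta [x [y [xY yY nxy ->]]].
apply/inDelta. exists x, y. split => //; exact: sub.
Qed.

Lemma delta1 a : delta [fset a] = fset0.
Proof.
apply/fsetP => z. rewrite inE. apply/inDelta => [[x [y [xY yY nxy _]]]].
move: xY yY nxy. rewrite !in_fset1 => /eqP -> /eqP ->. by rewrite eqxx.
Qed.

Section Step.
Variables (S C : {fset nat}) (a : nat).
Hypothesis aS : a \in S.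
Hypothesis CS : C `<=` S.
Hypothesis bitC : forall y, y \in C -> (s S \in d y) != (s S \in d a).

Lemma aC : a \notin C.
Proof. apply/negP => /bitC. by rewrite eqxx. Qed.

Lemma t_notin Y : Y `<=` C -> s S \notin delta Y.
Proof.
move=> /fsubsetP YC. apply/negP => /inDelta [x [y [xY yY nxy e]]].
have xC := YC _ xY. have yC := YC _ yY.
have xS : x \in S by apply: (fsubsetP CS).
have yS : y \in S by apply: (fsubsetP CS).
have h : (s S \in d x) = (s S \in d y).
  move: (bitC xC) (bitC yC). by case: (s S \in d x); case: (s S \in d y); case: (s S \in d a).
have := K2 xS yS nxy h. by rewrite -e ltnn.
Qed.

Lemma delta_add Y : Y `<=` C -> Y != fset0 -> delta (a |` Y) = s S |` delta Y.
Proof.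
move=> /fsubsetP YC Yn. apply/fsetP => z. rewrite in_fset1U. apply/idP/idP.
  move=> /inDelta [x [y [xY yY nxy ->]]]. move: xY yY nxy. rewrite !in_fset1U.
  case/orP => [/eqP ->|xY]; case/orP => [/eqP ->|yY].
  - by rewrite eqxx.
  - move=> _. rewrite (@K1 S a y) ?eqxx //; first exact: (fsubsetP CS _ (YC _ yY)).
    by rewrite eq_sym bitC // YC.
  - move=> _. rewrite (@K1 S x a) ?eqxx //; first exact: (fsubsetP CS _ (YC _ xY)).
    by rewrite bitC // YC.
  - move=> nxy. apply/orP; right. apply/inDelta. by exists x, y.
case/orP.
  move/eqP => ->. case/fset0Pn: Yn => y yY. apply/inDelta. exists a, y.
  have yS : y \in S by apply: (fsubsetP CS); apply: YC.
  split; rewrite ?in_fset1U ?eqxx ?yY ?orbT //.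
    apply/eqP => e. by move: (YC _ yY) (aC); rewrite -e => ->.
  rewrite (@K1 S a y) // eq_sym bitC //. exact: YC.
apply: (fsubsetP (delta_sub (fsubsetU1 _ _))).
Qed.
End Step.

Definition Main S := (forall Y, Y `<=` S -> Y != fset0 -> #|` delta Y| = (#|` Y|).-1) /\
  (forall D, D `<=` delta S -> exists Y, [/\ Y `<=` S, #|` Y| = (#|` D|).+1 & D = delta Y]).

Lemma stepM S C a : a \in S -> S = a |` C ->
  (forall y, y \in C -> (s S \in d y) != (s S \in d a)) -> C != fset0 -> Main C -> Main S.
Proof.
move=> aS eS bitC Cn [IH1 IH2].
have CS : C `<=` S by rewrite eS fsubsetU1.
have aC' := aC bitC.
split.
  move=> Y YS Yn. case: (boolP (a \in Y)) => aY.
    set Y' := Y `&` C.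
    have Y'C : Y' `<=` C by apply: fsubsetIr.
    have eY : Y = a |` Y'.
      apply/fsetP => z. rewrite in_fset1U in_fsetI. case: (boolP (z == a)) => [/eqP -> //|nza /=].
      case: (boolP (z \in Y)) => //= zY. move: (fsubsetP YS _ zY). by rewrite eS in_fset1U (negbTE nza).
    have aY' : a \notin Y'. apply/negP => /(fsubsetP Y'C). by rewrite (negbTE aC').
    case: (boolP (Y' == fset0)) => [/eqP e0|Y'n].
      by rewrite eY e0 fsetU0 delta1 cardfs1 cardfs0.
    rewrite eY (delta_add aS CS bitC Y'C Y'n) cardfsU1 (t_notin CS bitC Y'C) cardfsU1 aY' /=.
    rewrite IH1 // add1n prednK //. by rewrite cardfs_gt0.
  apply: IH1 => //. apply/fsubsetP => z zY. have := fsubsetP YS _ zY.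
  rewrite eS in_fset1U. case/orP => // /eqP ez. by move: aY; rewrite -ez zY.
move=> D DS.
have eD : delta S = s S |` delta C by rewrite {1}eS (delta_add aS CS bitC (fsubset_refl _) Cn).
rewrite eD in DS.
case: (boolP (s S \in D)) => tD.
  have D'C : D `\ s S `<=` delta C.
    apply/fsubsetP => z. rewrite in_fsetD1 => /andP [nz zD]. move: (fsubsetP DS _ zD).
    by rewrite in_fset1U (negbTE nz).
  have [Y' [Y'C cY' eY']] := IH2 _ D'C.
  have Y'n : Y' != fset0 by rewrite -cardfs_gt0 cY'.
  have aY' : a \notin Y'. apply/negP => /(fsubsetP Y'C). by rewrite (negbTE aC').
  exists (a |` Y'). split.
  - rewrite eS. apply/fsubsetP => z. rewrite !in_fset1U. case/orP => [->//|/(fsubsetP Y'C) ->]. by rewrite orbT.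
  - by rewrite cardfsU1 aY' cY' (cardfsD1 (s S) D) tD.
  - by rewrite (delta_add aS CS bitC Y'C Y'n) -eY' fsetD1K.
have DC : D `<=` delta C.
  apply/fsubsetP => z zD. move: (fsubsetP DS _ zD). rewrite in_fset1U. case/orP => // /eqP ez.
  by move: tD; rewrite -ez zD.
have [Y [YC cY eY]] := IH2 _ DC. exists Y. split => //. exact: fsubset_trans YC CS.
Qed.

Lemma in_split0 S x : (x \in split0 S) = (x \in S) && (s S \notin d x).
Proof. by rewrite /split0 !inE. Qed.
Lemma in_split1 S x : (x \in split1 S) = (x \in S) && (s S \in d x).
Proof. by rewrite /split1 !inE. Qed.
Lemma split0_sub S : split0 S `<=` S.
Proof. apply/fsubsetP => x; rewrite in_split0; by case/andP. Qed.
Lemma split1_sub S : split1 S `<=` S.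
Proof. apply/fsubsetP => x; rewrite in_split1; by case/andP. Qed.

Lemma gen S a C : a \in S -> C `<=` S ->
  (forall x, x \in S -> (x \in C) = ((s S \in d x) != (s S \in d a))) ->
  (forall x, x \in S -> (s S \in d x) = (s S \in d a) -> x = a) ->
  S = a |` C /\ (forall y, y \in C -> (s S \in d y) != (s S \in d a)).
Proof.
move=> aS CS HC Ha. split; last first.
  move=> y yC. by rewrite -HC // (fsubsetP CS).
apply/fsetP => z. rewrite in_fset1U. case: (boolP (z \in S)) => zS.
  case: (boolP (z == a)) => //= nza. rewrite HC //.
  case: (boolP (_ != _)) => //. rewrite negbK => /eqP h. by rewrite (Ha _ zS h) eqxx in nza.
case: (boolP (z == a)) => [/eqP ez|_]; first by rewrite ez aS in zS.
by apply/esym/negP => /(fsubsetP CS); rewrite (negbTE zS).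
Qed.

Lemma cat_main n (S : {fset nat}) : #|` S| <= n -> caterpillar S -> S != fset0 -> Main S.
Proof.
elim: n S => [|n IH] S.
  rewrite leqn0 => /eqP/cardfs0_eq -> _. by rewrite eqxx.
move=> Sn Hc Sne. revert Sn Sne. destruct Hc as [S S1|S S2 H].
  move=> _ Sne.
  have /cardfs1P [a ->] : #|` S| == 1 by rewrite eqn_leq S1 cardfs_gt0.
  split.
    move=> Y. rewrite fsubset1 => /orP [/eqP ->|/eqP ->] Yn; last by rewrite eqxx in Yn.
    by rewrite delta1 cardfs1 cardfs0.
  move=> D. rewrite delta1 fsubset0 => /eqP ->. exists [fset a]. by rewrite cardfs1 cardfs0 delta1.
move=> Sn _.
have key : forall a C, a \in S -> C `<=` S -> caterpillar C ->
  (forall x, x \in S -> (x \in C) = ((s S \in d x) != (s S \in d a))) ->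
  (forall x, x \in S -> (s S \in d x) = (s S \in d a) -> x = a) -> Main S.
  move=> a C aS CS Cc HC Ha. have [eS bitC] := gen aS CS HC Ha.
  have aC' : a \notin C. apply/negP => /bitC. by rewrite eqxx.
  have cS : #|` S| = (#|` C|).+1 by rewrite {1}eS cardfsU1 aC'.
  have Cn : C != fset0. rewrite -cardfs_gt0. by move: S2; rewrite cS ltnS.
  apply: (stepM aS eS bitC Cn). apply: IH => //. by move: Sn; rewrite cS ltnS.
case: H => [[c0 Cc]|[c1 Cc]].
  have /cardfs1P [a ea] : #|` split0 S| == 1 by rewrite c0.
  have : a \in split0 S by rewrite ea fset11.
  rewrite in_split0 => /andP [aS ta].
  apply: (key a (split1 S) aS (split1_sub S) Cc).
    move=> x xS. by rewrite in_split1 xS (negbTE ta) /= ; case: (_ \in _).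
  move=> x xS h. apply/eqP. rewrite -in_fset1 -ea in_split0 xS h ta //.
have /cardfs1P [a ea] : #|` split1 S| == 1 by rewrite c1.
have : a \in split1 S by rewrite ea fset11.
rewrite in_split1 => /andP [aS ta].
apply: (key a (split0 S) aS (split0_sub S) Cc).
  move=> x xS. by rewrite in_split0 xS ta /= ; case: (_ \in _).
move=> x xS h. apply/eqP. by rewrite -in_fset1 -ea in_split1 xS h ta.
Qed.

Unset Implicit Arguments.
Unset Strict Implicit.

Theorem mainTheorem6 (S : {fset nat}) (r : nat) :
  caterpillar S -> S != fset0 ->
  forall D : {fset nat},
    (D `<=` delta S /\ #|` D| = r) <->
    (exists Y : {fset nat}, [/\ Y `<=` S, #|` Y| = r.+1 & D = delta Y]).
Proof.
move=> Hc Sn D. have [M1 M2] := cat_main (leqnn _) Hc Sn. split.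
  move=> [DS <-]. exact: M2.
move=> [Y [YS cY ->]]. split; first exact: delta_sub.
rewrite M1 // ?cY // -cardfs_gt0 cY //.
Qed.
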